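(* Consider $n$ users with strictly concave, continuously differentiable utilities $u_i:\mathbb{R}_+\to\mathbb{R}$ and budgets $b_i>0$, served by a system operator with a strictly convex, coercive, continuously differentiable cost $C:\mathbb{R}_+\to\mathbb{R}$, and assume some user $i$ has $u_i'(0)>C'(0)$. Let $\hat u_i$ be the modified utility of user $i$ (defined in the context). Then the problem $$(\hat{\mathcal P})\quad \max_{x,y}\ \sum_{i=1}^n \hat u_i(x_i)-C(y)\quad\text{s.t. } x_i\ge 0\ \forall i,\quad \sum_{i=1}^n x_i=y$$ is a convex optimization problem whose unique optimal allocations $(\hat x^*,\hat y^* )$ and optimal dual variable $\hat\lambda^*$ (of the constraint $\sum_i x_i=y$) equal the budget-constrained equilibrium allocations and price: $\hat\lambda^*=\lambda^*$, $\hat x_i^*=x_i^*(\lambda^* )$ for all $i$, and $\hat y^*=y^*(\lambda^* )$.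
   Context: For $\lambda>0$: $x_i^*(\lambda)=\max\{0,\min\{(u_i')^{-1}(\lambda),\ b_i/\lambda\}\}$ (maximizer of $u_i(x)-\lambda x$ over $x\ge0$ with $\lambda x\le b_i$) and $y^*(\lambda)=(C')^{-1}(\lambda)$ (maximizer of $\lambda y-C(y)$ over $y\ge0$). The equilibrium price $\lambda^*$ is the unique $\lambda^*>0$ with $\sum_i x_i^*(\lambda^* )=y^*(\lambda^* )$; it is the limit of the dual-ascent iteration $\lambda^{k+1}=\lambda^k+\alpha^k(\sum_i x_i^*(\lambda^k)-y^*(\lambda^k))$. Modified utility: for a utility $u$ and budget $b>0$, let $0=\tilde x_0<\tilde x_1<\dots<\tilde x_k<\tilde x_{k+1}=\infty$, where $\tilde x_1,\dots,\tilde x_k$ are the (crossover) solutions $\tilde x>0$ of $u'(\tilde x)=b/\tilde x$. On each interval $(\tilde x_{j-1},\tilde x_j)$ either $u'(x)\le b/x$ throughout or $u'(x)>b/x$ throughout; define $\hat u(x)=u(x)+c_j$ on intervals of the first type and $\hat u(x)=b\log x+d_j$ on intervals of the second type, where the constants are chosen sequentially so that $\hat u$ is continuous, with $c_1=d_1=0$. Then $\hat u_i$ is this construction applied to $u_i,b_i$. *)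

(* Defs.v *)
From Stdlib Require Import Reals List.
From Coquelicot Require Import Coquelicot.
Open Scope R_scope.

Definition sumR (n : nat) (f : nat -> R) : R :=
  fold_right Rplus 0 (map f (seq 0 n)).

Definition C1_nonneg (f df : R -> R) : Prop :=
  (forall x, 0 < x -> is_derive f x (df x)) /\
  filterlim (fun h => (f h - f 0) / h) (at_right 0) (locally (df 0)) /\
  (forall x, 0 < x -> continuous df x) /\
  filterlim df (at_right 0) (locally (df 0)).

Definition concave_nonneg (f : R -> R) : Prop :=
  forall x y t, 0 <= x -> 0 <= y -> 0 <= t <= 1 ->
    t * f x + (1 - t) * f y <= f (t * x + (1 - t) * y).

Definition strictly_concave_nonneg (f : R -> R) : Prop :=
  forall x y t, 0 <= x -> 0 <= y -> x <> y -> 0 < t < 1 ->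
    t * f x + (1 - t) * f y < f (t * x + (1 - t) * y).

Definition strictly_convex_nonneg (f : R -> R) : Prop :=
  forall x y t, 0 <= x -> 0 <= y -> x <> y -> 0 < t < 1 ->
    f (t * x + (1 - t) * y) < t * f x + (1 - t) * f y.

Definition coercive_nonneg (f : R -> R) : Prop :=
  forall M, exists N, forall y, N <= y -> M <= f y.

Definition user_best_response (u : R -> R) (b lam x : R) : Prop :=
  0 <= x /\ lam * x <= b /\
  forall z, 0 <= z -> lam * z <= b -> u z - lam * z <= u x - lam * x.

Definition operator_best_response (C : R -> R) (lam y : R) : Prop :=
  0 <= y /\ forall z, 0 <= z -> lam * z - C z <= lam * y - C y.

Definition equilibrium (n : nat) (u : nat -> R -> R) (b : nat -> R)
  (C : R -> R) (lam : R) (xs : nat -> R) (ys : R) : Prop :=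
  0 < lam /\
  (forall i, (i < n)%nat -> user_best_response (u i) (b i) lam (xs i)) /\
  operator_best_response C lam ys /\
  sumR n xs = ys.

(* Modified utility (construction of the paper).
   s = list of crossover points 0 < x~_1 < ... < x~_k (all solutions x>0 of
   u'(x) = b/x); intervals I_j = (x~_{j-1}, x~_j), j = 0..k (0-based),
   with x~_0 = 0 and x~_{k+1} = +oo. *)
Definition interval_left (s : list R) (j : nat) : R :=
  match j with O => 0 | S j' => nth j' s 0 end.

Definition in_interval (s : list R) (j : nat) (x : R) : Prop :=
  interval_left s j < x /\ ((j < length s)%nat -> x < nth j s 0).

Definition modified_utility (u du : R -> R) (b : R) (uh : R -> R) : Prop :=
  exists s : list R,
    (forall j, (j < length s)%nat -> 0 < nth j s 0) /\
    (forall j, (S j < length s)%nat -> nth j s 0 < nth (S j) s 0) /\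
    (forall x, 0 < x -> (du x = b / x <-> In x s)) /\
    (forall j, (j <= length s)%nat ->
       exists c : R, (j = O -> c = 0) /\
         (((forall x, in_interval s j x -> du x <= b / x) /\
           (forall x, in_interval s j x -> uh x = u x + c))
          \/
          ((forall x, in_interval s j x -> du x > b / x) /\
           (forall x, in_interval s j x -> uh x = b * ln x + c)))) /\
    (* constants chosen so that uh is continuous (on [0,oo)) *)
    (forall x, 0 < x -> continuous uh x) /\
    filterlim uh (at_right 0) (locally (uh 0)).

Definition feasible (n : nat) (x : nat -> R) (y : R) : Prop :=
  (forall i, (i < n)%nat -> 0 <= x i) /\ sumR n x = y.

Definition objective (n : nat) (uh : nat -> R -> R) (C : R -> R)
  (x : nat -> R) (y : R) : R :=
  sumR n (fun i => uh i (x i)) - C y.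

Definition primal_optimal (n : nat) (uh : nat -> R -> R) (C : R -> R)
  (x : nat -> R) (y : R) : Prop :=
  feasible n x y /\
  forall x' y', feasible n x' y' -> objective n uh C x' y' <= objective n uh C x y.

Definition lagrangian (n : nat) (uh : nat -> R -> R) (C : R -> R)
  (lam : R) (x : nat -> R) (y : R) : R :=
  objective n uh C x y + lam * (y - sumR n x).

(* lam is an optimal dual variable for the constraint sum x_i = y:
   the dual function sup_{x>=0,y>=0} L(x,y,lam) does not exceed the
   optimal primal value (hence equals it by weak duality, and lam
   minimizes the dual function with zero duality gap). *)
Definition dual_optimal (n : nat) (uh : nat -> R -> R) (C : R -> R)
  (lam : R) : Prop :=
  exists x0 y0, primal_optimal n uh C x0 y0 /\
    forall x y, (forall i, (i < n)%nat -> 0 <= x i) -> 0 <= y ->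
      lagrangian n uh C lam x y <= objective n uh C x0 y0.

(* Main.v *)
Require Import Defs.
From Stdlib Require Import Reals List Lra Lia.
From Coquelicot Require Import Coquelicot.
Open Scope R_scope.

Lemma ballR (x y:R) (e:posreal) : ball y e x <-> Rabs (x - y) < e.
Proof. unfold ball; simpl; unfold AbsRing_ball, abs, minus, plus, opp; simpl. tauto. Qed.

Definition lim0 (P : R -> Prop) (F : R -> R) (l : R) : Prop :=
  forall eps, 0 < eps -> exists del, 0 < del /\
    forall h, P h -> Rabs h < del -> Rabs (F h - l) < eps.

Lemma lim_ge P F l K : lim0 P F l ->
  (forall del, 0 < del -> exists h, P h /\ Rabs h < del /\ K <= F h) -> K <= l.
Proof.
  intros HL HK. destruct (Rle_lt_dec K l) as [|Hlt]; auto.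
  destruct (HL (K - l)) as [del [Hd Hh]]; [lra|].
  destruct (HK del Hd) as [h [Ph [Hh1 Hh2]]].
  specialize (Hh h Ph Hh1). apply Rabs_def2 in Hh. lra.
Qed.

Lemma lim_le P F l K : lim0 P F l ->
  (forall del, 0 < del -> exists h, P h /\ Rabs h < del /\ F h <= K) -> l <= K.
Proof.
  intros HL HK. destruct (Rle_lt_dec l K) as [|Hlt]; auto.
  destruct (HL (l - K)) as [del [Hd Hh]]; [lra|].
  destruct (HK del Hd) as [h [Ph [Hh1 Hh2]]].
  specialize (Hh h Ph Hh1). apply Rabs_def2 in Hh. lra.
Qed.

Definition RD f p l := lim0 (fun h => 0 < h) (fun h => (f (p + h) - f p) / h) l.
Definition LD f p l := lim0 (fun h => h < 0) (fun h => (f (p + h) - f p) / h) l.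

Lemma derive_RD f p l : is_derive f p l -> RD f p l.
Proof.
  intros H. apply is_derive_Reals in H. intros eps He.
  destruct (H eps He) as [d Hd]. exists d. split; [apply cond_pos|].
  intros h Hh Ha. apply Hd; auto. lra.
Qed.

Lemma derive_LD f p l : is_derive f p l -> LD f p l.
Proof.
  intros H. apply is_derive_Reals in H. intros eps He.
  destruct (H eps He) as [d Hd]. exists d. split; [apply cond_pos|].
  intros h Hh Ha. apply Hd; auto. lra.
Qed.

Lemma right0_RD f l : filterlim (fun h => (f h - f 0) / h) (at_right 0) (locally l) ->
  RD f 0 l.
Proof.
  intros H eps He. apply filterlim_locally with (eps := mkposreal eps He) in H.
  destruct H as [d Hd]. exists d. split; [apply cond_pos|].
  intros h Hh Ha. rewrite Rplus_0_l.
  assert (B : ball 0 d h) by (apply ballR; rewrite Rminus_0_r; auto).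
  specialize (Hd h B Hh). apply ballR in Hd. exact Hd.
Qed.

Definition rcont (f : R -> R) a := forall eps, 0 < eps -> exists del, 0 < del /\
  forall y, a < y < a + del -> Rabs (f y - f a) < eps.
Definition lcont (f : R -> R) e := forall eps, 0 < eps -> exists del, 0 < del /\
  forall y, e - del < y < e -> Rabs (f y - f e) < eps.

Lemma cont_rcont f a : continuous f a -> rcont f a.
Proof.
  intros H eps He. apply filterlim_locally with (eps := mkposreal eps He) in H.
  destruct H as [d Hd]. exists d. split; [apply cond_pos|].
  intros y Hy. assert (B : ball a d y) by (apply ballR; rewrite Rabs_pos_eq; lra).
  specialize (Hd y B). apply ballR in Hd. exact Hd.
Qed.

Lemma cont_lcont f a : continuous f a -> lcont f a.
Proof.
  intros H eps He. apply filterlim_locally with (eps := mkposreal eps He) in H.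
  destruct H as [d Hd]. exists d. split; [apply cond_pos|].
  intros y Hy. assert (B : ball a d y) by (apply ballR; rewrite Rabs_left; simpl; lra).
  specialize (Hd y B). apply ballR in Hd. exact Hd.
Qed.

Lemma right0_rcont f : filterlim f (at_right 0) (locally (f 0)) -> rcont f 0.
Proof.
  intros H eps He. apply filterlim_locally with (eps := mkposreal eps He) in H.
  destruct H as [d Hd]. exists d. split; [apply cond_pos|].
  intros y Hy. assert (B : ball 0 d y) by (apply ballR; rewrite Rabs_pos_eq; lra).
  specialize (Hd y B ltac:(lra)). apply ballR in Hd. exact Hd.
Qed.

Lemma small_pick (del a b c : R) : 0 < del -> 0 < a -> 0 < b -> 0 < c ->
  exists d, 0 < d /\ d < del /\ d < a /\ d < b /\ d < c.
Proof.
  intros. exists (Rmin (Rmin del a) (Rmin b c) / 2).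
  pose proof (Rmin_l (Rmin del a) (Rmin b c)). pose proof (Rmin_r (Rmin del a) (Rmin b c)).
  pose proof (Rmin_l del a). pose proof (Rmin_r del a). pose proof (Rmin_l b c). pose proof (Rmin_r b c).
  assert (0 < Rmin (Rmin del a) (Rmin b c)).
  { apply Rmin_pos; apply Rmin_pos; auto. }
  lra.
Qed.

Lemma EL_r_le f a e al be : rcont f a -> a < e ->
  (forall x, a < x < e -> f x <= al + be * x) -> f a <= al + be * a.
Proof.
  intros Hc Hae H. destruct (Rle_lt_dec (f a) (al + be * a)) as [|Hlt]; auto.
  set (eps := f a - (al + be * a)).
  destruct (Hc (eps/2)) as [del [Hd Hy]]; [unfold eps; lra|].
  destruct (small_pick del (e - a) 1 (eps / (4 * (Rabs be + 1)))) as [d [H0 [H1 [H2 [H3 H4]]]]]; auto; try lra.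
  { apply Rdiv_lt_0_compat. unfold eps; lra. pose proof (Rabs_pos be); lra. }
  specialize (Hy (a + d) ltac:(lra)). specialize (H (a + d) ltac:(lra)).
  apply Rabs_def2 in Hy.
  assert (Hb : Rabs be * d <= eps / 4).
  { assert (d * (4 * (Rabs be + 1)) < eps).
    { apply (Rmult_lt_compat_r (4 * (Rabs be + 1))) in H4; [|pose proof (Rabs_pos be); lra].
      unfold Rdiv in H4. rewrite Rmult_assoc, Rinv_l in H4; [lra|pose proof (Rabs_pos be); lra]. }
    pose proof (Rabs_pos be). nra. }
  assert (be * d <= Rabs be * d) by (apply Rmult_le_compat_r; [lra|apply Rle_abs]).
  unfold eps in *. nra.
Qed.

Lemma EL_r_ge f a e al be : rcont f a -> a < e ->
  (forall x, a < x < e -> al + be * x <= f x) -> al + be * a <= f a.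
Proof.
  intros Hc Hae H.
  assert (Hc' : rcont (fun x => - f x) a).
  { intros eps He. destruct (Hc eps He) as [d [Hd Hy]]. exists d; split; auto.
    intros y Hy'. specialize (Hy y Hy'). rewrite <- Rabs_Ropp. replace (- (- f y - - f a)) with (f y - f a) by ring. auto. }
  pose proof (EL_r_le (fun x => - f x) a e (- al) (- be) Hc' Hae). simpl in H0.
  assert (- f a <= - al + - be * a); [|lra].
  apply H0. intros x Hx. specialize (H x Hx). lra.
Qed.

Lemma EL_l_le f e c al be : lcont f e -> c < e ->
  (forall x, c < x < e -> f x <= al + be * x) -> f e <= al + be * e.
Proof.
  intros Hc Hae H.
  set (g := fun x => f (- x)).
  assert (Hg : rcont g (- e)).
  { intros eps He. destruct (Hc eps He) as [d [Hd Hy]]. exists d; split; auto.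
    intros y Hy'. unfold g. rewrite Ropp_involutive. apply Hy. lra. }
  pose proof (EL_r_le g (- e) (- c) al (- be) Hg ltac:(lra)).
  unfold g in H0. rewrite Ropp_involutive in H0.
  replace (al + be * e) with (al + - be * - e) by ring. apply H0.
  intros x Hx. replace (al + - be * x) with (al + be * (- x)) by ring. apply H. lra.
Qed.

Lemma EL_l_ge f e c al be : lcont f e -> c < e ->
  (forall x, c < x < e -> al + be * x <= f x) -> al + be * e <= f e.
Proof.
  intros Hc Hae H.
  assert (Hc' : lcont (fun x => - f x) e).
  { intros eps He. destruct (Hc eps He) as [d [Hd Hy]]. exists d; split; auto.
    intros y Hy'. specialize (Hy y Hy'). rewrite <- Rabs_Ropp. replace (- (- f y - - f e)) with (f y - f e) by ring. auto. }
  pose proof (EL_l_le (fun x => - f x) e c (- al) (- be) Hc' Hae). simpl in H0.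
  assert (- f e <= - al + - be * e); [|lra].
  apply H0. intros x Hx. specialize (H x Hx). lra.
Qed.

Lemma div_le_cross a b c d : 0 < c -> 0 < d -> a * d <= b * c -> a / c <= b / d.
Proof.
  intros Hc Hd H.
  apply Rmult_le_reg_r with (c * d); [nra|].
  replace (a / c * (c * d)) with (a * d) by (field; lra).
  replace (b / d * (c * d)) with (b * c) by (field; lra). exact H.
Qed.

Lemma le_div_mult a c K : 0 < c -> K <= a / c -> K * c <= a.
Proof.
  intros Hc H. apply Rmult_le_compat_r with (r := c) in H; [|lra].
  replace (a / c * c) with a in H by (field; lra). exact H.
Qed.

Lemma div_le_mult a c K : 0 < c -> a / c <= K -> a <= K * c.
Proof.
  intros Hc H. apply Rmult_le_compat_r with (r := c) in H; [|lra].
  replace (a / c * c) with a in H by (field; lra). exact H.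
Qed.

Lemma three_slope u p r q : strictly_concave_nonneg u -> 0 <= p -> p < r -> r < q ->
  (q - r) * u p + (r - p) * u q < (q - p) * u r.
Proof.
  intros Hu Hp Hpr Hrq.
  set (t := (q - r) / (q - p)).
  assert (Ht : 0 < t < 1).
  { unfold t. split. apply Rdiv_lt_0_compat; lra.
    apply Rmult_lt_reg_r with (q - p); [lra|]. unfold Rdiv. rewrite Rmult_assoc, Rinv_l; lra. }
  assert (Hr : t * p + (1 - t) * q = r) by (unfold t; field; lra).
  pose proof (Hu p q t Hp ltac:(lra) ltac:(lra) Ht). rewrite Hr in H.
  assert (E1 : (q - r) = t * (q - p)) by (unfold t; field; lra).
  assert (E2 : (r - p) = (1 - t) * (q - p)) by (unfold t; field; lra).
  rewrite E1, E2. nra.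
Qed.

Lemma C1_RD f df p : C1_nonneg f df -> 0 <= p -> RD f p (df p).
Proof.
  intros [H1 [H2 _]] Hp. destruct (Req_dec p 0) as [->|Hp0].
  - apply right0_RD; auto.
  - apply derive_RD, H1. lra.
Qed.

Lemma u_upper u du p q : strictly_concave_nonneg u -> C1_nonneg u du -> 0 <= p -> p < q ->
  u q - u p <= du p * (q - p).
Proof.
  intros Hu Hc Hp Hpq.
  assert (K : (u q - u p) / (q - p) <= du p).
  { apply (lim_ge _ _ _ _ (C1_RD u du p Hc Hp)).
    intros del Hd. destruct (small_pick del (q - p) 1 1) as [h [? [? [? _]]]]; try lra.
    exists h. split; [lra|]. split; [rewrite Rabs_pos_eq; lra|].
    apply div_le_cross; try lra.
    pose proof (three_slope u p (p + h) q Hu Hp ltac:(lra) ltac:(lra)).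
    replace (p + h - p) with h in H2 by ring. nra. }
  apply div_le_mult in K; lra.
Qed.

Lemma u_lower u du p q : strictly_concave_nonneg u -> C1_nonneg u du -> 0 <= p -> p < q ->
  du q * (q - p) <= u q - u p.
Proof.
  intros Hu Hc Hp Hpq.
  destruct Hc as [H1 _].
  assert (K : du q <= (u q - u p) / (q - p)).
  { apply (lim_le _ _ _ _ (derive_LD u q (du q) (H1 q ltac:(lra)))).
    intros del Hd. destruct (small_pick del (q - p) 1 1) as [h [? [? [? _]]]]; try lra.
    exists (- h). split; [lra|]. split; [rewrite Rabs_Ropp, Rabs_pos_eq; lra|].
    replace (q + - h) with (q - h) by ring.
    replace ((u (q - h) - u q) / - h) with ((u q - u (q - h)) / h) by (field; lra).
    apply div_le_cross; try lra.
    pose proof (three_slope u p (q - h) q Hu Hp ltac:(lra) ltac:(lra)).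
    nra. }
  apply le_div_mult in K; lra.
Qed.

Lemma du_strict u du p q : strictly_concave_nonneg u -> C1_nonneg u du -> 0 <= p -> p < q ->
  du q < du p.
Proof.
  intros Hu Hc Hp Hpq. set (m := (p + q) / 2).
  pose proof (u_upper u du p m Hu Hc Hp ltac:(unfold m; lra)).
  pose proof (u_lower u du m q Hu Hc ltac:(unfold m; lra) ltac:(unfold m; lra)).
  pose proof (three_slope u p m q Hu Hp ltac:(unfold m; lra) ltac:(unfold m; lra)).
  assert (Eq1 : q - m = (q - p) / 2) by (unfold m; field).
  assert (Eq2 : m - p = (q - p) / 2) by (unfold m; field).
  rewrite Eq1 in *. rewrite Eq2 in *.
  set (d := (q - p) / 2) in *.
  assert (Hd : 0 < d) by (unfold d; lra).
  assert (Eq3 : q - p = 2 * d) by (unfold d; field).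
  rewrite Eq3 in H1.
  assert (du q * d < du p * d) by nra.
  apply Rmult_lt_reg_r with d; auto.
Qed.

Lemma ln_upper p q : 0 < p -> p < q -> ln q - ln p <= (q - p) / p.
Proof.
  intros. rewrite <- ln_div by lra.
  pose proof (exp_ineq1_le (ln (q / p))). rewrite exp_ln in H1.
  2: apply Rdiv_lt_0_compat; lra.
  replace ((q - p) / p) with (q / p - 1) by (field; lra). lra.
Qed.

Lemma ln_lower p q : 0 < p -> p < q -> (q - p) / q <= ln q - ln p.
Proof.
  intros. pose proof (exp_ineq1_le (ln (p / q))). rewrite exp_ln in H1.
  2: apply Rdiv_lt_0_compat; lra.
  rewrite ln_div in H1 by lra.
  replace ((q - p) / q) with (1 - p / q) by (field; lra). lra.
Qed.

Definition gg (du : R -> R) (b x : R) : R :=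
  if Rle_dec x 0 then du 0 else Rmin (du x) (b / x).

Lemma gg_pos du b x : 0 < x -> gg du b x = Rmin (du x) (b / x).
Proof. intros. unfold gg. destruct (Rle_dec x 0); [lra|auto]. Qed.

Lemma gg_dec u du b p q : strictly_concave_nonneg u -> C1_nonneg u du -> 0 < b ->
  0 <= p -> p < q -> gg du b q < gg du b p.
Proof.
  intros Hu Hc Hb Hp Hpq. rewrite (gg_pos du b q) by lra.
  pose proof (du_strict u du p q Hu Hc Hp Hpq).
  destruct (Req_dec p 0) as [->|Hp0].
  - unfold gg. destruct (Rle_dec 0 0); [|lra]. pose proof (Rmin_l (du q) (b / q)). lra.
  - rewrite gg_pos by lra.
    assert (b / q < b / p).
    { apply Rmult_lt_compat_l; auto. apply Rinv_lt_contravar; nra. }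
    unfold Rmin. destruct (Rle_dec (du q) (b / q)); destruct (Rle_dec (du p) (b / p)); lra.
Qed.

Definition Sand (uh g : R -> R) p q := g q * (q - p) <= uh q - uh p <= g p * (q - p).

Lemma glue uh g p r q : p < r -> r < q -> g q <= g r -> g r <= g p ->
  Sand uh g p r -> Sand uh g r q -> Sand uh g p q.
Proof.
  unfold Sand. intros. split; nra.
Qed.

Definition MU (u du : R -> R) (b : R) (uh : R -> R) (s : list R) : Prop :=
    (forall j, (j < length s)%nat -> 0 < nth j s 0) /\
    (forall j, (S j < length s)%nat -> nth j s 0 < nth (S j) s 0) /\
    (forall j, (j <= length s)%nat ->
       exists c : R, (j = O -> c = 0) /\
         (((forall x, in_interval s j x -> du x <= b / x) /\
           (forall x, in_interval s j x -> uh x = u x + c))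
          \/
          ((forall x, in_interval s j x -> du x > b / x) /\
           (forall x, in_interval s j x -> uh x = b * ln x + c)))) /\
    (forall x, 0 < x -> continuous uh x) /\
    filterlim uh (at_right 0) (locally (uh 0)).

Lemma MU_of u du b uh : modified_utility u du b uh -> exists s, MU u du b uh s.
Proof.
  intros [s [H1 [H2 [_ [H4 [H5 H6]]]]]]. exists s. repeat split; auto.
Qed.

Lemma left_nonneg s j : (forall j, (j < length s)%nat -> 0 < nth j s 0) ->
  (j <= length s)%nat -> 0 <= interval_left s j.
Proof.
  intros H Hj. destruct j; simpl; [lra|]. left. apply H. lia.
Qed.

Lemma left_lt_right s j : (forall j, (j < length s)%nat -> 0 < nth j s 0) ->
  (forall j, (S j < length s)%nat -> nth j s 0 < nth (S j) s 0) ->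
  (j < length s)%nat -> interval_left s j < nth j s 0.
Proof.
  intros H0 H1 Hj. destruct j; simpl; [apply H0; lia|]. apply H1. lia.
Qed.

Lemma interior u du b uh s j p q : strictly_concave_nonneg u -> C1_nonneg u du -> 0 < b ->
  MU u du b uh s -> (j <= length s)%nat ->
  in_interval s j p -> in_interval s j q -> p < q -> Sand uh (gg du b) p q.
Proof.
  intros Hu Hc Hb [H0 [H1 [H2 _]]] Hj Ip Iq Hpq.
  pose proof (left_nonneg s j H0 Hj) as Hl.
  assert (Pp : 0 < p) by (destruct Ip; lra).
  unfold Sand. rewrite !gg_pos by lra.
  destruct (H2 j Hj) as [c [_ [[Hd Hf]|[Hd Hf]]]]; rewrite (Hf p Ip), (Hf q Iq).
  - rewrite !Rmin_left by (apply Hd; auto).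
    pose proof (u_upper u du p q Hu Hc ltac:(lra) Hpq).
    pose proof (u_lower u du p q Hu Hc ltac:(lra) Hpq).
    unfold Sand. lra.
  - rewrite !Rmin_right by (left; apply Hd; auto).
    pose proof (ln_upper p q Pp Hpq). pose proof (ln_lower p q Pp Hpq).
    unfold Sand. split.
    + replace (b * ln q + c - (b * ln p + c)) with (b * (ln q - ln p)) by ring.
      replace (b / q * (q - p)) with (b * ((q - p) / q)) by (field; lra).
      apply Rmult_le_compat_l; lra.
    + replace (b * ln q + c - (b * ln p + c)) with (b * (ln q - ln p)) by ring.
      replace (b / p * (q - p)) with (b * ((q - p) / p)) by (field; lra).
      apply Rmult_le_compat_l; lra.
Qed.

Lemma uh_rcont u du b uh s a : MU u du b uh s -> 0 <= a -> rcont uh a.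
Proof.
  intros [_ [_ [_ [H3 H4]]]] Ha. destruct (Req_dec a 0) as [->|].
  - apply right0_rcont; auto.
  - apply cont_rcont, H3. lra.
Qed.

Lemma uh_lcont u du b uh s a : MU u du b uh s -> 0 < a -> lcont uh a.
Proof.
  intros [_ [_ [_ [H3 H4]]]] Ha. apply cont_lcont, H3. lra.
Qed.

Lemma Sclosed u du b uh s j p q : strictly_concave_nonneg u -> C1_nonneg u du -> 0 < b ->
  MU u du b uh s -> (j <= length s)%nat ->
  interval_left s j <= p -> p < q -> ((j < length s)%nat -> q <= nth j s 0) ->
  Sand uh (gg du b) p q.
Proof.
  intros Hu Hc Hb HM Hj Hp Hpq Hq.
  pose proof HM as [H0 [H1 _]].
  pose proof (left_nonneg s j H0 Hj) as Hl.
  set (g := gg du b).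
  assert (gd : forall x y, 0 <= x -> x < y -> g y <= g x).
  { intros. left. apply (gg_dec u du b); auto. }
  assert (St2 : forall p q, interval_left s j <= p -> p < q ->
            ((j < length s)%nat -> q < nth j s 0) -> Sand uh g p q).
  { clear p q Hp Hpq Hq. intros p q Hp Hpq Hq.
    assert (Iq : in_interval s j q) by (split; [lra|auto]).
    assert (Int : forall x, p < x < q -> Sand uh g x q).
    { intros x Hx. apply (interior u du b uh s j); auto; try lra.
      split; [lra|]. intros Hj'. specialize (Hq Hj'). lra. }
    destruct (Req_dec p (interval_left s j)) as [Ep|Ep].
    - assert (Hrc := uh_rcont u du b uh s p HM ltac:(lra)).
      split.
      + assert (uh p <= (uh q - g q * q) + g q * p); [|lra].
        apply (EL_r_le uh p q); auto.
        intros x Hx. destruct (Int x Hx) as [A B]. lra.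
      + assert ((uh q - g p * q) + g p * p <= uh p); [|lra].
        apply (EL_r_ge uh p q); auto.
        intros x Hx. destruct (Int x Hx) as [A B].
        pose proof (gd p x ltac:(lra) ltac:(lra)). nra.
    - assert (Ip : in_interval s j p).
      { split; [lra|]. intros Hj'. specialize (Hq Hj'). lra. }
      apply (interior u du b uh s j); auto. }
  destruct (Nat.lt_ge_cases j (length s)) as [Hjl|Hjl].
  - destruct (Req_dec q (nth j s 0)) as [Eq|Eq].
    + assert (Hlc := uh_lcont u du b uh s q HM ltac:(lra)).
      assert (Int : forall x, p < x < q -> Sand uh g p x).
      { intros x Hx. apply St2; auto; lra. }
      split.
      * assert ((uh p - g q * p) + g q * q <= uh q); [|lra].
        apply (EL_l_ge uh q p); auto.
        intros x Hx. destruct (Int x Hx) as [A B].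
        pose proof (gd x q ltac:(lra) ltac:(lra)). nra.
      * assert (uh q <= (uh p - g p * p) + g p * q); [|lra].
        apply (EL_l_le uh q p); auto.
        intros x Hx. destruct (Int x Hx) as [A B]. lra.
    + apply St2; auto. intros. specialize (Hq H). lra.
  - apply St2; auto. intros. lia.
Qed.

Lemma Sall u du b uh s : strictly_concave_nonneg u -> C1_nonneg u du -> 0 < b ->
  MU u du b uh s -> forall p q, 0 <= p -> p < q -> Sand uh (gg du b) p q.
Proof.
  intros Hu Hc Hb HM.
  pose proof HM as [H0 [H1 _]].
  assert (gd : forall x y, 0 <= x -> x < y -> gg du b y <= gg du b x).
  { intros. left. apply (gg_dec u du b); auto. }
  assert (Ind : forall j, (j <= length s)%nat -> forall p q, 0 <= p -> p < q ->
      ((j < length s)%nat -> q <= nth j s 0) -> Sand uh (gg du b) p q).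
  { induction j; intros Hj p q Hp Hpq Hq.
    - apply (Sclosed u du b uh s 0); auto; lia.
    - assert (Hr : 0 < nth j s 0) by (apply H0; lia).
      destruct (Rle_lt_dec q (nth j s 0)) as [Hqr|Hqr].
      + apply IHj; auto; lia.
      + destruct (Rle_lt_dec (nth j s 0) p) as [Hrp|Hrp].
        * apply (Sclosed u du b uh s (S j)); auto.
        * apply (glue uh (gg du b) p (nth j s 0) q); auto; try (apply gd; lra).
          -- apply IHj; auto; try lia; try lra; intros; lra.
          -- apply (Sclosed u du b uh s (S j)); simpl; auto; lra. }
  intros p q Hp Hpq. apply (Ind (length s)); auto. lia.
Qed.

Lemma pos_div_le a h K : 0 < h -> a <= K * h -> a / h <= K.
Proof.
  intros Hh H. apply Rmult_le_reg_r with h; auto.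
  replace (a / h * h) with a by (field; lra). lra.
Qed.

Lemma neg_div_ge a h K : h < 0 -> a <= K * h -> K <= a / h.
Proof.
  intros Hh H. replace (a / h) with ((- a) / (- h)) by (field; lra).
  apply Rmult_le_reg_r with (- h); [lra|].
  replace (- a / - h * - h) with (- a) by (field; lra). lra.
Qed.

Lemma Sstrict u du b uh s p q : strictly_concave_nonneg u -> C1_nonneg u du -> 0 < b ->
  MU u du b uh s -> 0 <= p -> p < q ->
  gg du b q * (q - p) < uh q - uh p < gg du b p * (q - p).
Proof.
  intros Hu Hc Hb HM Hp Hpq. set (m := (p + q) / 2).
  destruct (Sall u du b uh s Hu Hc Hb HM p m Hp ltac:(unfold m; lra)) as [A1 A2].
  destruct (Sall u du b uh s Hu Hc Hb HM m q ltac:(unfold m; lra) ltac:(unfold m; lra)) as [B1 B2].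
  pose proof (gg_dec u du b p m Hu Hc Hb Hp ltac:(unfold m; lra)).
  pose proof (gg_dec u du b m q Hu Hc Hb ltac:(unfold m; lra) ltac:(unfold m; lra)).
  assert (0 < m - p) by (unfold m; lra). assert (0 < q - m) by (unfold m; lra).
  split; nra.
Qed.

Lemma uh_concave u du b uh s : strictly_concave_nonneg u -> C1_nonneg u du -> 0 < b ->
  MU u du b uh s -> concave_nonneg uh.
Proof.
  intros Hu Hc Hb HM.
  assert (Key : forall x y t, 0 <= x -> x < y -> 0 < t < 1 ->
            t * uh x + (1 - t) * uh y <= uh (t * x + (1 - t) * y)).
  { intros x y t Hx Hxy Ht. set (m := t * x + (1 - t) * y).
    assert (x < m) by (unfold m; nra). assert (m < y) by (unfold m; nra).
    destruct (Sall u du b uh s Hu Hc Hb HM x m Hx ltac:(lra)) as [A1 A2].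
    destruct (Sall u du b uh s Hu Hc Hb HM m y ltac:(lra) ltac:(lra)) as [B1 B2].
    set (gm := gg du b m) in *.
    assert (E : (1 - t) * (y - m) - t * (m - x) = 0) by (unfold m; ring).
    assert (t * (uh m - uh x) >= t * (gm * (m - x))) by nra.
    assert ((1 - t) * (uh y - uh m) <= (1 - t) * (gm * (y - m))) by nra.
    nra. }
  intros x y t Hx Hy Ht.
  destruct (Req_dec t 0) as [->|Ht0].
  { replace (0 * x + (1 - 0) * y) with y by ring. lra. }
  destruct (Req_dec t 1) as [->|Ht1].
  { replace (1 * x + (1 - 1) * y) with x by ring. lra. }
  destruct (Rtotal_order x y) as [Hxy|[Hxy|Hxy]].
  - apply Key; auto; lra.
  - subst. replace (t * y + (1 - t) * y) with y by ring. lra.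
  - pose proof (Key y x (1 - t) Hy Hxy ltac:(lra)).
    replace (1 - (1 - t)) with t in H by ring.
    replace (t * x + (1 - t) * y) with ((1 - t) * y + t * x) by ring. lra.
Qed.

Lemma best_g u du b lam xs : strictly_concave_nonneg u -> C1_nonneg u du -> 0 < b ->
  0 < lam -> user_best_response u b lam xs ->
  gg du b xs <= lam /\ (0 < xs -> lam <= gg du b xs).
Proof.
  intros Hu Hc Hb Hl [Hx0 [Hxb Hbest]].
  destruct (Req_dec xs 0) as [E|Hxs].
  - subst xs. split; [|lra].
    unfold gg. destruct (Rle_dec 0 0); [|lra].
    apply (lim_le _ _ _ _ (C1_RD u du 0 Hc ltac:(lra))).
    intros del Hd. destruct (small_pick del (b / lam) 1 1) as [h [Hh0 [Hh1 [Hh2 _]]]]; try lra.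
    { apply Rdiv_lt_0_compat; lra. }
    exists h. split; [lra|]. split; [rewrite Rabs_pos_eq; lra|].
    rewrite Rplus_0_l. apply pos_div_le; auto.
    assert (lam * h <= b).
    { apply Rmult_lt_compat_l with (r := lam) in Hh2; auto.
      replace (lam * (b / lam)) with b in Hh2 by (field; lra). lra. }
    pose proof (Hbest h ltac:(lra) H). lra.
  - assert (Hp : 0 < xs) by lra. rewrite gg_pos by lra.
    assert (L1 : lam <= du xs).
    { destruct Hc as [H1 _].
      apply (lim_ge _ _ _ _ (derive_LD u xs (du xs) (H1 xs Hp))).
      intros del Hd. destruct (small_pick del xs 1 1) as [h [Hh0 [Hh1 [Hh2 _]]]]; try lra.
      exists (- h). split; [lra|]. split; [rewrite Rabs_Ropp, Rabs_pos_eq; lra|].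
      apply neg_div_ge; [lra|].
      assert (Hb2 : lam * (xs + - h) <= b) by nra.
      pose proof (Hbest (xs + - h) ltac:(lra) Hb2). lra. }
    assert (L2 : lam <= b / xs).
    { apply Rmult_le_reg_r with xs; auto. replace (b / xs * xs) with b by (field; lra). lra. }
    split.
    + destruct (Rle_lt_dec b (lam * xs)) as [Eb|Eb].
      * assert (b / xs = lam).
        { apply Rmult_eq_reg_r with xs; [|lra]. field_simplify; lra. }
        pose proof (Rmin_r (du xs) (b / xs)). lra.
      * assert (du xs <= lam).
        { apply (lim_le _ _ _ _ (C1_RD u du xs Hc ltac:(lra))).
          intros del Hd. destruct (small_pick del ((b - lam * xs) / lam) 1 1) as [h [Hh0 [Hh1 [Hh2 _]]]]; try lra.
          { apply Rdiv_lt_0_compat; lra. }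
          exists h. split; [lra|]. split; [rewrite Rabs_pos_eq; lra|].
          apply pos_div_le; auto.
          assert (lam * h <= b - lam * xs).
          { apply Rmult_lt_compat_l with (r := lam) in Hh2; auto.
            replace (lam * ((b - lam * xs) / lam)) with (b - lam * xs) in Hh2 by (field; lra). lra. }
          pose proof (Hbest (xs + h) ltac:(lra) ltac:(lra)). lra. }
        pose proof (Rmin_l (du xs) (b / xs)). lra.
    + intros _. unfold Rmin. destruct (Rle_dec (du xs) (b / xs)); lra.
Qed.

Lemma user_max u du b uh s lam xs : strictly_concave_nonneg u -> C1_nonneg u du -> 0 < b ->
  MU u du b uh s -> 0 < lam -> user_best_response u b lam xs ->
  forall z, 0 <= z -> z <> xs -> uh z - lam * z < uh xs - lam * xs.
Proof.
  intros Hu Hc Hb HM Hl Hbr z Hz Hne.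
  pose proof Hbr as [Hx0 _].
  destruct (best_g u du b lam xs Hu Hc Hb Hl Hbr) as [G1 G2].
  destruct (Rtotal_order z xs) as [H|[H|H]]; [|contradiction|].
  - destruct (Sstrict u du b uh s z xs Hu Hc Hb HM Hz H) as [A _].
    specialize (G2 ltac:(lra)). nra.
  - destruct (Sstrict u du b uh s xs z Hu Hc Hb HM Hx0 H) as [_ A]. nra.
Qed.

Lemma fold_plus_acc (l : list R) a : fold_right Rplus a l = fold_right Rplus 0 l + a.
Proof. induction l; simpl; [lra|rewrite IHl; lra]. Qed.

Lemma sumR_S n f : sumR (S n) f = sumR n f + f n.
Proof.
  unfold sumR. rewrite seq_S, map_app, fold_right_app. simpl.
  rewrite fold_plus_acc. lra.
Qed.

Lemma sumR_le n f g : (forall i, (i < n)%nat -> f i <= g i) -> sumR n f <= sumR n g.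
Proof.
  induction n; intros H; [unfold sumR; simpl; lra|].
  rewrite !sumR_S. pose proof (H n ltac:(lia)). assert (sumR n f <= sumR n g) by (apply IHn; intros; apply H; lia). lra.
Qed.

Lemma sumR_eq_le n f g : (forall i, (i < n)%nat -> f i <= g i) -> sumR n f = sumR n g ->
  forall i, (i < n)%nat -> f i = g i.
Proof.
  induction n; intros H E i Hi; [lia|].
  rewrite !sumR_S in E. pose proof (H n ltac:(lia)).
  assert (sumR n f <= sumR n g) by (apply sumR_le; intros; apply H; lia).
  assert (f n = g n) by lra.
  destruct (Nat.eq_dec i n) as [->|Hn]; auto.
  apply IHn; [intros; apply H; lia|lra|lia].
Qed.

Lemma sumR_lin n f x c : sumR n (fun i => f i - c * x i) = sumR n f - c * sumR n x.
Proof.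
  induction n; [unfold sumR; simpl; ring|]. rewrite !sumR_S, IHn. ring.
Qed.

Lemma sumR_zero n : sumR n (fun _ => 0) = 0.
Proof. induction n; [unfold sumR; simpl; ring|]. rewrite sumR_S, IHn. ring. Qed.

Lemma op_unique C lam ys y : strictly_convex_nonneg C -> operator_best_response C lam ys ->
  0 <= y -> lam * y - C y = lam * ys - C ys -> y = ys.
Proof.
  intros Hc [Hy0 Hb] Hy E. destruct (Req_dec y ys) as [|Hne]; auto. exfalso.
  pose proof (Hc y ys (1/2) Hy Hy0 Hne ltac:(lra)).
  pose proof (Hb (1/2 * y + (1 - 1/2) * ys) ltac:(lra)). nra.
Qed.

Lemma le_div_pos a h K : 0 < h -> K * h <= a -> K <= a / h.
Proof.
  intros Hh H. apply Rmult_le_reg_r with h; auto.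
  replace (a / h * h) with a by (field; lra). lra.
Qed.

Lemma le_div_neg a h K : h < 0 -> K * h <= a -> a / h <= K.
Proof.
  intros Hh H. replace (a / h) with ((- a) / (- h)) by (field; lra).
  apply Rmult_le_reg_r with (- h); [lra|].
  replace (- a / - h * - h) with (- a) by (field; lra). lra.
Qed.

Lemma op_deriv C dC mu ys : C1_nonneg C dC -> 0 < ys ->
  (forall y, 0 <= y -> mu * y - C y <= mu * ys - C ys) -> dC ys = mu.
Proof.
  intros Hc Hys Hm. apply Rle_antisym.
  - destruct Hc as [H1 _].
    apply (lim_le _ _ _ _ (derive_LD C ys (dC ys) (H1 ys Hys))).
    intros del Hd. destruct (small_pick del ys 1 1) as [h [Hh0 [Hh1 [Hh2 _]]]]; try lra.
    exists (- h). split; [lra|]. split; [rewrite Rabs_Ropp, Rabs_pos_eq; lra|].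
    apply le_div_neg; [lra|].
    pose proof (Hm (ys + - h) ltac:(lra)). lra.
  - apply (lim_ge _ _ _ _ (C1_RD C dC ys Hc ltac:(lra))).
    intros del Hd. destruct (small_pick del 1 1 1) as [h [Hh0 [Hh1 [Hh2 _]]]]; try lra.
    exists h. split; [lra|]. split; [rewrite Rabs_pos_eq; lra|].
    apply le_div_pos; [lra|].
    pose proof (Hm (ys + h) ltac:(lra)). lra.
Qed.

Theorem theorem2 (n : nat) (u du : nat -> R -> R) (b : nat -> R)
  (C dC : R -> R) (uh : nat -> R -> R) (lam : R) (xs : nat -> R) (ys : R) :
  (forall i, (i < n)%nat -> strictly_concave_nonneg (u i)) ->
  (forall i, (i < n)%nat -> C1_nonneg (u i) (du i)) ->
  (forall i, (i < n)%nat -> 0 < b i) ->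
  strictly_convex_nonneg C -> coercive_nonneg C -> C1_nonneg C dC ->
  (exists i, (i < n)%nat /\ dC 0 < du i 0) ->
  (forall i, (i < n)%nat -> modified_utility (u i) (du i) (b i) (uh i)) ->
  equilibrium n u b C lam xs ys ->
  (forall i, (i < n)%nat -> concave_nonneg (uh i)) /\
  primal_optimal n uh C xs ys /\
  (forall x y, primal_optimal n uh C x y ->
     (forall i, (i < n)%nat -> x i = xs i) /\ y = ys) /\
  dual_optimal n uh C lam /\
  (forall l, dual_optimal n uh C l -> l = lam).
Proof.
  intros Hu Hc Hb Hconv Hcoer HC [i0 [Hi0 Hdi0]] Hmu [Hl [Hbr [Hop Hsum]]].
  assert (Hmax : forall i, (i < n)%nat -> forall z, 0 <= z -> z <> xs i ->
            uh i z - lam * z < uh i (xs i) - lam * xs i).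
  { intros i Hi. destruct (MU_of _ _ _ _ (Hmu i Hi)) as [s Hs].
    apply (user_max (u i) (du i) (b i) (uh i) s); auto. }
  assert (Hmax' : forall i, (i < n)%nat -> forall z, 0 <= z ->
            uh i z - lam * z <= uh i (xs i) - lam * xs i).
  { intros i Hi z Hz. destruct (Req_dec z (xs i)) as [->|Hne]; [lra|].
    left; apply Hmax; auto. }
  assert (Hxs0 : forall i, (i < n)%nat -> 0 <= xs i) by (intros i Hi; apply (Hbr i Hi)).
  destruct Hop as [Hys0 Hopm].
  assert (Lag : forall x y, (forall i, (i < n)%nat -> 0 <= x i) -> 0 <= y ->
            lagrangian n uh C lam x y <= objective n uh C xs ys).
  { intros x y Hx Hy. unfold lagrangian, objective.
    assert (S1 : sumR n (fun i => uh i (x i) - lam * x i) <=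
                 sumR n (fun i => uh i (xs i) - lam * xs i)).
    { apply sumR_le. intros i Hi. apply Hmax'; auto. }
    rewrite (sumR_lin n (fun i => uh i (x i)) x lam) in S1.
    rewrite (sumR_lin n (fun i => uh i (xs i)) xs lam) in S1.
    pose proof (Hopm y Hy). rewrite <- Hsum in *. lra. }
  assert (Hfeas : feasible n xs ys) by (split; auto).
  assert (Hprim : primal_optimal n uh C xs ys).
  { split; auto. intros x' y' [Hx' Hs'].
    assert (Hy' : 0 <= y').
    { rewrite <- Hs'. rewrite <- (sumR_zero n). apply sumR_le. auto. }
    pose proof (Lag x' y' Hx' Hy'). unfold lagrangian in H.
    rewrite Hs' in H. lra. }
  assert (Huniq : forall x y, primal_optimal n uh C x y ->
     (forall i, (i < n)%nat -> x i = xs i) /\ y = ys).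
  { intros x y [[Hx Hs] Hopt].
    assert (Hy : 0 <= y).
    { rewrite <- Hs. rewrite <- (sumR_zero n). apply sumR_le. auto. }
    pose proof (Hopt xs ys Hfeas) as O1.
    pose proof (Hprim) as [_ O2]. specialize (O2 x y (conj Hx Hs)).
    unfold objective in O1, O2.
    assert (S1 : sumR n (fun i => uh i (x i) - lam * x i) <=
                 sumR n (fun i => uh i (xs i) - lam * xs i)).
    { apply sumR_le. intros i Hi. apply Hmax'; auto. }
    pose proof (Hopm y Hy) as B.
    pose proof (sumR_lin n (fun i => uh i (x i)) x lam) as E1.
    pose proof (sumR_lin n (fun i => uh i (xs i)) xs lam) as E2.
    rewrite Hs in E1.
    assert (EA : sumR n (fun i => uh i (x i) - lam * x i) =
                 sumR n (fun i => uh i (xs i) - lam * xs i)) by (rewrite <- Hsum in *; lra).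
    assert (EB : lam * y - C y = lam * ys - C ys) by (rewrite <- Hsum in *; lra).
    split.
    - intros i Hi. pose proof (sumR_eq_le n _ _ (fun i Hi => Hmax' i Hi (x i) (Hx i Hi)) EA i Hi).
      destruct (Req_dec (x i) (xs i)) as [|Hne]; auto.
      pose proof (Hmax i Hi (x i) (Hx i Hi) Hne). lra.
    - apply (op_unique C lam ys y); auto. split; auto. }
  assert (Hyspos : 0 < ys).
  { destruct (Req_dec ys 0) as [E|]; [|lra]. exfalso.
    assert (Hx0 : xs i0 = 0).
    { symmetry. apply (sumR_eq_le n (fun _ => 0) xs); auto. rewrite sumR_zero. congruence. }
    destruct (best_g (u i0) (du i0) (b i0) lam (xs i0) (Hu i0 Hi0) (Hc i0 Hi0) (Hb i0 Hi0) Hl (Hbr i0 Hi0)) as [G _].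
    rewrite Hx0 in G. unfold gg in G. destruct (Rle_dec 0 0); [|lra].
    assert (lam <= dC 0).
    { apply (lim_ge _ _ _ _ (C1_RD C dC 0 HC ltac:(lra))).
      intros del Hd. destruct (small_pick del 1 1 1) as [h [Hh0 [Hh1 [Hh2 _]]]]; try lra.
      exists h. split; [lra|]. split; [rewrite Rabs_pos_eq; lra|].
      apply le_div_pos; [lra|].
      pose proof (Hopm (0 + h) ltac:(lra)). rewrite E in H. lra. }
    lra. }
  split; [|split; [auto|split; [auto|split]]].
  - intros i Hi. destruct (MU_of _ _ _ _ (Hmu i Hi)) as [s Hs].
    apply (uh_concave (u i) (du i) (b i) (uh i) s); auto.
  - exists xs, ys. split; auto.
  - intros l [x0 [y0 [Hp0 Hd0]]].
    destruct (Huniq x0 y0 Hp0) as [Ex Ey].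
    assert (Eo : objective n uh C x0 y0 = objective n uh C xs ys).
    { destruct Hp0 as [F0 O0]. destruct Hprim as [_ O1].
      pose proof (O0 xs ys Hfeas). pose proof (O1 x0 y0 F0). lra. }
    assert (Hm : forall y, 0 <= y -> l * y - C y <= l * ys - C ys).
    { intros y Hy. pose proof (Hd0 xs y Hxs0 Hy) as D. rewrite Eo in D.
      unfold lagrangian, objective in D. rewrite Hsum in D. lra. }
    pose proof (op_deriv C dC l ys HC Hyspos Hm).
    pose proof (op_deriv C dC lam ys HC Hyspos Hopm). lra.
Qed.
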